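(* Let $P=(N,L)$ be a filtration pair for $f$ (for some isolated invariant set), let $N_L=N/L$ be the quotient space in which $L$ is collapsed to a point $[L]$ taken as base point (if $L=\emptyset$, $N_L$ is the disjoint union of $N$ and a single point $[L]$), and let $p:N\to N_L$ be the quotient map. Then the map $f_P:N_L\to N_L$ given by $f_P([L])=[L]$ and $f_P(p(x))=p(f(x))$ for $x\in N\setminus L$ is a well-defined continuous base-point preserving map, and $[L]\in\operatorname{Int} f_P^{-1}([L])$.
   Context: Let $X$ be a locally compact metric space, $U\subset X$ open and $f:U\to X$ continuous. For $N\subset U$, a solution through $x$ is a map $\sigma:\mathbb Z\to U$ with $\sigma(0)=x$ and $f(\sigma(n))=\sigma(n+1)$ for all $n$; $\operatorname{Inv} N$ is the set of $x\in N$ admitting a solution through $x$ with all values in $N$. A compact set $N\subset U$ is an isolating neighborhood if $\operatorname{Inv} N\subset\operatorname{Int} N$; a set $S$ is an isolated invariant set if $S=\operatorname{Inv} N$ for some isolating neighborhood $N$. The exit set of $N$ is $N^-=\{x\in N: f(x)\notin\operatorname{Int} N\}$. A filtration pair for an isolated invariant set $S$ is a pair of compact sets $L\subset N$ contained in the interior of the domain of $f$, each equal to the closure of its interior, such that (1) $\operatorname{cl}(N\setminus L)$ is an isolating neighborhood with $\operatorname{Inv}\operatorname{cl}(N\setminus L)=S$; (2) $L$ is a neighborhood of $N^-$ in $N$; (3) $f(L)\cap\operatorname{cl}(N\setminus L)=\emptyset$. *)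

(* Defs.v *)
From HB Require Import structures.
From mathcomp Require Import all_boot all_order all_algebra.
From mathcomp Require Import all_classical all_reals all_analysis.
Set Implicit Arguments. Unset Strict Implicit. Unset Printing Implicit Defensive.
Import Order.TTheory GRing.Theory Num.Theory.
Local Open Scope classical_set_scope.
Local Open Scope ring_scope.

Section Conley.
Context {R : realType} {X : metricType R}.

(* f : U -> X is modelled as a total map X -> X, only its values on U matter. *)

Definition solution_in (U : set X) (f : X -> X) (A : set X) (sigma : int -> X) (x : X) :=
  sigma 0 = x /\ (forall n : int, U (sigma n) /\ A (sigma n) /\ f (sigma n) = sigma (n + 1)).

Definition Inv (U : set X) (f : X -> X) (N : set X) : set X :=
  [set x | N x /\ exists sigma, solution_in U f N sigma x].

Definition isolating_neighborhood (U : set X) (f : X -> X) (N : set X) :=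
  compact N /\ N `<=` U /\ Inv U f N `<=` interior N.

Definition isolated_invariant_set (U : set X) (f : X -> X) (S : set X) :=
  exists N, isolating_neighborhood U f N /\ S = Inv U f N.

Definition exit_set (f : X -> X) (N : set X) : set X :=
  [set x | N x /\ ~ (interior N) (f x)].

Definition filtration_pair (U : set X) (f : X -> X) (S N L : set X) :=
  compact N /\ compact L /\ L `<=` N /\ N `<=` interior U /\
  closure (interior N) = N /\ closure (interior L) = L /\
  isolating_neighborhood U f (closure (N `\` L)) /\
  Inv U f (closure (N `\` L)) = S /\
  (* (2) L is a neighborhood of N^- relative to N *)
  (exists O : set X, open O /\ exit_set f N `<=` O /\ O `&` N `<=` L) /\
  (f @` L) `&` closure (N `\` L) = set0.

(* The pointed quotient N_L = N/L: the points of N \ L together with a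
   base point [L] = None. *)
Definition quot (N L : set X) := option {x : X | (N `\` L) x}.

(* the quotient map p : N -> N_L (defined on all of X, used only on N) *)
Definition qmap (N L : set X) (x : X) : quot N L :=
  match pselect ((N `\` L) x) with
  | left h => Some (exist _ x h)
  | right _ => None
  end.

(* quotient topology: V is open iff p^{-1}(V) is open in N (subspace topology) *)
Definition quot_open (N L : set X) (V : set (quot N L)) :=
  exists O : set X, open O /\ N `&` (qmap N L @^-1` V) = N `&` O.

Definition quot_continuous (N L : set X) (g : quot N L -> quot N L) :=
  forall V, quot_open V -> quot_open (g @^-1` V).

Definition quot_interior (N L : set X) (A : set (quot N L)) : set (quot N L) :=
  [set y | exists W, quot_open W /\ W y /\ W `<=` A].

End Conley.

(* Main.v *)
Require Import Defs.
From HB Require Import structures.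
From mathcomp Require Import all_boot all_order all_algebra.
From mathcomp Require Import all_classical all_reals all_analysis.
Local Open Scope classical_set_scope.

Section Helpers.
Context {R : realType} {X : metricType R}.

Lemma rel_open_aux (N A : set X) :
  (forall x, N x -> A x -> nbhs x (fun y => N y -> A y)) ->
  exists O, open O /\ N `&` A = N `&` O.
Proof.
move=> H; exists (interior [set y | N y -> A y]); split; first exact: open_interior.
apply/seteqP; split => x [Nx Ax]; split => //.
- exact: H.
- exact: (interior_subset Ax Nx).
Qed.

Lemma cont_pre (f : X -> X) (x : X) (A : set X) :
  {for x, continuous f} -> open A -> A (f x) -> nbhs x (f @^-1` A).
Proof. by move=> cf oA Afx; apply: cf; apply: open_nbhs_nbhs. Qed.

Lemma qmap_in (N L : set X) y (h : (N `\` L) y) : qmap N L y = Some (exist _ y h).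
Proof.
rewrite /qmap; case: pselect => h'; last by [].
by congr Some; congr exist; apply: Prop_irrelevance.
Qed.

Lemma qmap_out (N L : set X) y : ~ (N `\` L) y -> qmap N L y = None.
Proof. by rewrite /qmap; case: pselect. Qed.

End Helpers.
Arguments qmap_in {R X N L y}.
Arguments qmap_out {R X N L y}.
Arguments cont_pre {R X f x A}.


Theorem mainTheorem4 (R : realType) (X : metricType R)
  (U : set X) (f : X -> X) (S N L : set X) :
  locally_compact [set: X] ->
  open U ->
  (forall x, U x -> {for x, continuous f}) ->
  isolated_invariant_set U f S ->
  filtration_pair U f S N L ->
  (* well-definedness: p(f(x)) makes sense for x in N \ L *)
  (forall x, (N `\` L) x -> N (f x)) /\
  exists fP : quot N L -> quot N L,
    [/\ fP None = None,
        (forall x (hx : (N `\` L) x), fP (Some (exist _ x hx)) = qmap N L (f x)),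
        quot_continuous fP &
        quot_interior (fP @^-1` [set None]) None].
Proof.
move=> _ _ fc _ [cN [cL [LN [NU [i1 [clL [i2 [i3 [[Oex [oOe [exO ONL]]] disj]]]]]]]]].
have NUx : forall x, N x -> U x by move=> x /NU /interior_subset.
have fcN : forall x, N x -> {for x, continuous f} by move=> x /NUx /fc.
have clLc : closed L by rewrite -clL; exact: closed_closure.
have part1 : forall x, (N `\` L) x -> N (f x).
  move=> x [Nx nLx]; apply: contrapT => nNfx; apply: nLx; apply: ONL; split => //.
  apply: exO; split => //; move=> /interior_subset; exact: nNfx.
have disjx : forall x, L x -> ~ closure (N `\` L) (f x).
  move=> x Lx h; have : ((f @` L) `&` closure (N `\` L)) (f x) by split => //; exists x.
  by rewrite disj.
have ocl : open (~` closure (N `\` L)) by apply: closed_openC; exact: closed_closure.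
pose fP (q : quot N L) : quot N L :=
  match q with None => None | Some x => qmap N L (f (sval x)) end.
have fPin : forall y, (N `\` L) y -> fP (qmap N L y) = qmap N L (f y).
  by move=> y h; rewrite (qmap_in h).
have fPout : forall y, ~ (N `\` L) y -> fP (qmap N L y) = None.
  by move=> y h; rewrite (qmap_out h).
split => //; exists fP; split => //.
- move=> V [Q1 [oQ1 hO]]; apply: rel_open_aux => x Nx /= Vx.
  have [Lx|nLx] := pselect (L x).
  + have VN : V None by rewrite -(fPout x) // => -[].
    apply: filterS (cont_pre (fcN x Nx) ocl (disjx x Lx)) => y ncl Ny /=.
    have [h|h] := pselect ((N `\` L) y); last by rewrite fPout.
    rewrite fPin // qmap_out //; move=> h'; apply: ncl; exact: subset_closure.
  + have hx : (N `\` L) x by [].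
    rewrite fPin // in Vx.
    have : (N `&` (qmap N L @^-1` V)) (f x) by split => //; exact: part1.
    rewrite hO => -[_ Q1fx].
    have nL : nbhs x (~` L) by apply: open_nbhs_nbhs; split => //; exact: closed_openC.
    apply: filterS (filterI nL (cont_pre (fcN x Nx) oQ1 Q1fx)) => y [nLy Q1fy] Ny /=.
    have hy : (N `\` L) y by [].
    rewrite fPin //.
    have : (N `&` Q1) (f y) by split => //; exact: part1.
    by rewrite -hO => -[].
- pose W (q : quot N L) : Prop :=
    match q with None => True | Some x => ~ closure (N `\` L) (f (sval x)) end.
  exists W; split; [| split; [done |]]; last first.
    case=> [[x hx]|] h; last by [].
    rewrite /preimage /= qmap_out; first by [].
    move=> h'; apply: h; exact: subset_closure.
  apply: rel_open_aux => x Nx /= Wx.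
  have ncx : ~ closure (N `\` L) (f x).
    have [Lx|nLx] := pselect (L x); first exact: disjx.
    have hx : (N `\` L) x by [].
    by move: Wx; rewrite (qmap_in hx).
  apply: filterS (cont_pre (fcN x Nx) ocl ncx) => y ncy Ny /=.
  have [h|h] := pselect ((N `\` L) y); last by rewrite qmap_out.
  by rewrite (qmap_in h).
Qed.
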